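(* In Algorithm 6 (described in the context), assume each function $h_{A_i}$ is non-increasing. Then the values $z_1,\dots,z_s$ obtained in its second round form an optimal solution of the minimax problem $$\min_{q_1,\dots,q_s}\ \max_{1\leq i\leq s}h_{A_i}(q_i)\quad\text{s.t.}\quad \sum_{i=1}^sq_i\leq 2z,\quad q_i\in\{0,1,\dots,z\}\ (i=1,\dots,s).$$
   Context: For $A=\{(x_1,y_1),\dots,(x_l,y_l)\}\subset\mathbb{R}^2$ with $x_1<\dots<x_l$, the piecewise function $h_A:[x_1,\infty)\to\mathbb{R}$ is $h_A(x)=y_i$ for $x_i\leq x<x_{i+1}$ ($x_{l+1}=\infty$). Pairs are compared lexicographically: $(a,b)\prec(a',b')$ iff $a<a'$, or $a=a'$ and $b<b'$. Let $z\geq1$ be an integer, $[z]=\{0,1,\dots,z\}$, and $\Gamma=\{2^r:1\leq r\leq\lfloor\log_2z\rfloor, r\in\mathbb{Z}\}\cup\{0,z\}$. In Algorithm 6 (a two-round distributed coreset construction for $k$-center clustering with $z$ outliers over $s$ sites), each site $i$ computes real numbers $\tilde r_{i,q}$ for $q\in\Gamma$ and sends $h_{A_i}$, where $A_i=\{(q,\tilde r_{i,q}):q\in\Gamma\}$. The server sorts the $s(z+1)$ pairs $(h_{A_i}(q),i)$, $i\in\{1,\dots,s\}$, $q\in[z]$, in lexicographically decreasing order and selects the $(2z+1)$-th largest pair $(h_{A_{i_0}}(q_0),i_0)$. Then for $i\neq i_0$, $z_i=\min\{q\in[z]:(h_{A_i}(q),i)\prec(h_{A_{i_0}}(q_0),i_0)\}$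 (with $z_i=z$ if this set is empty), and $z_{i_0}=\min\{q\in\Gamma:h_{A_{i_0}}(q)=h_{A_{i_0}}(q_0)\}$. *)

(* Defs.v *)
From mathcomp Require Import all_boot all_order all_algebra.
Set Implicit Arguments. Unset Strict Implicit. Unset Printing Implicit Defensive.
Import Order.TTheory GRing.Theory Num.Theory.
Local Open Scope ring_scope.

Section Alg6.
Variable R : realDomainType.

Definition gamma_seq (z : nat) : seq nat :=
  [:: 0%N; z] ++ [seq (2 ^ r)%N | r <- iota 1 (trunc_log 2 z)].

(* h_{A_i}(q) for A_i = {(g, rt g) : g in Gamma}: the value at the largest
   g in Gamma with g <= q (0 is in Gamma, so this is defined for all q >= 0). *)
Definition hA (z : nat) (rt : nat -> R) (q : nat) : R :=
  rt (\max_(g <- gamma_seq z | (g <= q)%N) g)%N.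

Definition lexlt (p p' : R * nat) : bool :=
  (p.1 < p'.1) || ((p.1 == p'.1) && (p.2 < p'.2)%N).

Variable s : nat.

Definition all_pairs (z : nat) (rt : 'I_s -> nat -> R) : seq (R * nat) :=
  [seq (hA z (rt i) q, (i : nat).+1) | i <- enum 'I_s, q <- iota 0 z.+1].

Definition sorted_desc (z : nat) (rt : 'I_s -> nat -> R) : seq (R * nat) :=
  sort (fun p p' => ~~ lexlt p p') (all_pairs z rt).

(* the (2z+1)-th largest pair (h_{A_{i0}}(q0), i0) *)
Definition pivot (z : nat) (rt : 'I_s -> nat -> R) : R * nat :=
  nth (0, 0%N) (sorted_desc z rt) (2 * z)%N.

Definition zsol (z : nat) (rt : 'I_s -> nat -> R) (i : 'I_s) : nat :=
  let p0 := pivot z rt in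
  if ((i : nat).+1 == p0.2)%N then
    find (fun q => (q \in gamma_seq z) && (hA z (rt i) q == p0.1)) (iota 0 z.+1)
  else
    let P := fun q => lexlt (hA z (rt i) q, (i : nat).+1) p0 in
    if has P (iota 0 z.+1) then find P (iota 0 z.+1) else z.

End Alg6.

(* Main.v *)
Require Import Defs.
From mathcomp Require Import all_boot all_order all_algebra.
From mathcomp Require Import zify.
Set Implicit Arguments. Unset Strict Implicit. Unset Printing Implicit Defensive.
Import Order.TTheory GRing.Theory Num.Theory.
Local Open Scope ring_scope.

Section L.
Variable R : realDomainType.

Lemma lexlt_trans : transitive (@lexlt R).
Proof.
move=> [b1 b2] [a1 a2] [c1 c2]; rewrite /lexlt /=.
case/orP=> [h|/andP[/eqP e h]]; case/orP=> [h'|/andP[/eqP e' h']].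
- by rewrite (lt_trans h h').
- by rewrite -e' h.
- by rewrite e h'.
- by rewrite e e' eqxx (ltn_trans h h') orbT.
Qed.

Lemma lexlt_asym (p p' : R * nat) : lexlt p p' -> ~~ lexlt p' p.
Proof.
case: p p' => [a1 a2] [b1 b2]; rewrite /lexlt /=.
case/orP=> [h|/andP[/eqP e h]].
- by rewrite ltNge (ltW h) /= (gt_eqF h).
- rewrite e ltxx eq_refl /=; lia.
Qed.

Lemma lexlt_total (p p' : R * nat) : p != p' -> lexlt p p' || lexlt p' p.
Proof.
case: p p' => [a1 a2] [b1 b2]; rewrite /lexlt /= xpair_eqE.
case: (ltgtP a1 b1) => //= e; rewrite ?e ?eqxx /=; lia.
Qed.

Definition lge (p p' : R * nat) := ~~ lexlt p p'.

Lemma lge_total : total lge.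
Proof.
move=> p p'; rewrite /lge; case H: (lexlt p p') => //=.
by rewrite (lexlt_asym H).
Qed.

Lemma lge_trans : transitive lge.
Proof.
move=> b a c; rewrite /lge => hab hbc; apply/negP => hac.
case: (eqVneq b a) => [eba|nba].
  by rewrite eba hac in hbc.
case/orP: (lexlt_total nba) => h.
  by rewrite (lexlt_trans h hac) in hbc.
by rewrite h in hab.
Qed.

Lemma lexlt_irr (p : R * nat) : ~~ lexlt p p.
Proof. by case: p => a b; rewrite /lexlt /= ltxx eqxx ltnn. Qed.

Lemma sorted_count (S : seq (R * nat)) k x0 :
  sorted lge S -> (k < size S)%N ->
  (count (fun p => lexlt (nth x0 S k) p) S <= k)%N /\
  (k < count (fun p => ~~ lexlt p (nth x0 S k)) S)%N.
Proof.
move=> so ks; set x := nth x0 S k.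
have hom := sorted_ltn_nth lge_trans x0 so.
rewrite -(cat_take_drop k S) !count_cat.
have sd : sorted lge (drop k S) by apply: drop_sorted.
have dk : drop k S = x :: drop k.+1 S by rewrite (drop_nth x0 ks).
have Ad : all (lge x) (drop k.+1 S).
  apply: order_path_min; first exact: lge_trans.
  by move: sd; rewrite dk.
have At : all (fun p => ~~ lexlt p x) (take k S).
  apply/(all_nthP x0) => i; rewrite size_take ks => ik.
  rewrite nth_take //; apply: hom => //; rewrite inE; lia.
split.
- have -> : count (fun p => lexlt x p) (drop k S) = 0%N.
    rewrite dk /= (negbTE (lexlt_irr _)) /=; apply/eqP; rewrite -leqn0 leqNgt -has_count.
    apply/hasP => -[y /(allP Ad) ylx h]; by rewrite /lge h in ylx.
  rewrite addn0; apply: leq_trans (count_size _ _) _; rewrite size_take ks //.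
- move: At; rewrite all_count => /eqP ->; rewrite size_take ks dk /= (lexlt_irr _) /=.
  lia.
Qed.

Lemma count_iota_ge (a : pred nat) m n :
  (n <= m)%N -> (forall q, (q < n)%N -> a q) -> (n <= count a (iota 0 m))%N.
Proof.
move=> nm H; rewrite -size_filter -(size_iota 0 n).
apply: uniq_leq_size; first exact: iota_uniq.
move=> q; rewrite mem_iota add0n /= => qn; rewrite mem_filter mem_iota add0n H //=.
lia.
Qed.

Lemma count_iota_le (a : pred nat) m n :
  (forall q, a q -> (q < n)%N) -> (count a (iota 0 m) <= n)%N.
Proof.
move=> H; rewrite -size_filter -(size_iota 0 n).
apply: uniq_leq_size; first by apply: filter_uniq; exact: iota_uniq.
move=> q; rewrite mem_filter mem_iota => /andP[/H qn _]; rewrite mem_iota; lia.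
Qed.

Lemma hA_notgamma z (r : nat -> R) q :
  (0 < q)%N -> q \notin gamma_seq z -> hA z r q = hA z r q.-1.
Proof.
move=> q0 ng; rewrite /hA; congr r.
rewrite big_seq_cond [RHS]big_seq_cond; apply: eq_bigl => g.
case gi: (g \in gamma_seq z) => //=.
have : g != q by apply/eqP => e; rewrite -e gi in ng.
move/eqP => gq; apply/idP/idP; lia.
Qed.

Lemma count_L s z (rt : 'I_s -> nat -> R) (P : pred (R * nat)) :
  count P (all_pairs z rt) =
  (\sum_(i < s) count (fun q => P (hA z (rt i) q, (i : nat).+1)) (iota 0 z.+1))%N.
Proof.
rewrite /all_pairs count_flatten -map_comp sumnE big_map enumT.
apply: eq_bigr => i _ /=; by rewrite count_map.
Qed.

End L.

Theorem lemma19 (R : realDomainType) (s z : nat) (rt : 'I_s -> nat -> R) :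
  (1 <= z)%N -> (2 <= s)%N ->
  (* each h_{A_i} is non-increasing *)
  (forall (i : 'I_s) (q q' : nat), (q <= q')%N -> hA z (rt i) q' <= hA z (rt i) q) ->
  (* feasibility of (z_1, ..., z_s) *)
  (forall i : 'I_s, (zsol z rt i <= z)%N) /\
  (\sum_(i < s) zsol z rt i <= 2 * z)%N /\
  (* optimality: max_i h_{A_i}(z_i) <= max_i h_{A_i}(q_i) for every feasible q *)
  (forall q : 'I_s -> nat,
     (forall i, (q i <= z)%N) -> (\sum_(i < s) q i <= 2 * z)%N ->
     forall j : 'I_s, exists i : 'I_s, hA z (rt j) (zsol z rt j) <= hA z (rt i) (q i)).
Proof.
move=> z1 s2 hmono.
set L := all_pairs z rt.
set S := sorted_desc z rt.
set p0 := pivot z rt.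
have pS : perm_eq S L by rewrite /S /sorted_desc perm_sort perm_refl.
have szS : (2 * z < size S)%N.
  rewrite (perm_size pS) /L /all_pairs size_allpairs size_enum_ord size_iota; nia.
have [cgt cge] := sorted_count (0, 0%N) (sort_sorted (@lge_total R) L) szS.
rewrite -/S -/(pivot z rt) -/p0 !(permP pS) !count_L in cgt cge.
have p0L : p0 \in L by rewrite -(perm_mem pS) mem_nth.
case/allpairsP: p0L => -[i0 q0] /= [_ q0z p0E].
have {q0z} q0z : (q0 <= z)%N by move: q0z; rewrite -[0%N :: _]/(iota 0 z.+1) mem_iota; lia.
set v := p0.1.
have hq0 : hA z (rt i0) q0 = v by rewrite /v p0E.
have p02 : p0.2 = (i0 : nat).+1 by rewrite p0E.
have site : forall i : 'I_s,
   [/\ (zsol z rt i <= z)%N,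
       (zsol z rt i <= count (fun q => lexlt p0 (hA z (rt i) q, (i : nat).+1)) (iota 0 z.+1))%N
     & (hA z (rt i) (zsol z rt i) <= v) \/ zsol z rt i = z].
  move=> i; rewrite /zsol -/p0.
  case: ifP => [/eqP ii0 | nii0].
  - have ei : i = i0 by apply: val_inj; move: ii0; rewrite p02 => -[].
    subst i.
    set Q := (fun q => _ && _).
    set m := find (fun q => hA z (rt i0) q <= v) (iota 0 z.+1).
    have hasm : has (fun q => hA z (rt i0) q <= v) (iota 0 z.+1).
      by apply/hasP; exists q0; [rewrite mem_iota; lia | rewrite hq0].
    have mz : (m < z.+1)%N by rewrite -(size_iota 0 z.+1) -has_find.
    have hm : hA z (rt i0) m <= v.
      by have := nth_find 0%N hasm; rewrite -/m nth_iota.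
    have bm : forall q, (q < m)%N -> v < hA z (rt i0) q.
      move=> q qm; have := before_find 0%N qm; rewrite nth_iota; last lia.
      by rewrite add0n ltNge => ->.
    have mq0 : (m <= q0)%N.
      rewrite leqNgt; apply/negP => /bm; by rewrite hq0 ltxx.
    have hmv : hA z (rt i0) m = v.
      apply/eqP; rewrite eq_le hm /= -hq0; exact: hmono.
    have Qm : Q m.
      rewrite /Q hmv eqxx andbT.
      case: (posnP m) => [->|mp]; first by rewrite /gamma_seq inE.
      apply/negPn/negP => ng.
      have := hA_notgamma (rt i0) mp ng.
      have := bm m.-1 ltac:(lia); rewrite hmv => /[swap] <-; by rewrite ltxx.
    have fQ : (find Q (iota 0 z.+1) <= m)%N.
      rewrite leqNgt; apply/negP => mf.
      have := before_find 0%N mf; rewrite nth_iota // add0n; by rewrite Qm.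
    have hasQ : has Q (iota 0 z.+1) by apply/hasP; exists m; rewrite ?mem_iota.
    split.
    + lia.
    + apply: leq_trans fQ _; apply: count_iota_ge; first lia.
      move=> q qm; rewrite /lexlt /= bm //.
    + left; have := nth_find 0%N hasQ; rewrite nth_iota; last exact: leq_ltn_trans fQ mz.
      by rewrite add0n /Q => /andP[_ /eqP ->].
  - have nep : forall q, (hA z (rt i) q, (i : nat).+1) != p0.
      move=> q; apply/eqP => e; by rewrite -e /= eqxx in nii0.
    case: ifP => [hasP' | nhas].
    + set P := (fun q => _) in hasP' *.
      have fz : (find P (iota 0 z.+1) < z.+1)%N by move: hasP'; rewrite has_find size_iota.
      split.
      * lia.
      * apply: count_iota_ge; first lia.
        move=> q qf; have := before_find 0%N qf; rewrite nth_iota; last lia.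
        rewrite add0n /P => nl.
        by case/orP: (lexlt_total (nep q)) => // h; rewrite h in nl.
      * left; have := nth_find 0%N hasP'; rewrite nth_iota // add0n /P.
        rewrite /lexlt /= -/v => /orP[/ltW //|/andP[/eqP -> _]] //.
    + split=> //; last by right.
      apply: count_iota_ge => // q qz.
      have : ~~ has (fun q => lexlt (hA z (rt i) q, (i : nat).+1) p0) (iota 0 z.+1)
        by rewrite nhas.
      move/hasPn => /(_ q); rewrite mem_iota add0n => /(_ ltac:(lia)) nl.
      by case/orP: (lexlt_total (nep q)) => // h; rewrite h in nl.
have X : forall q : 'I_s -> nat, (forall i, (q i <= z)%N) ->
   (\sum_(i < s) q i <= 2 * z)%N -> exists i : 'I_s, v <= hA z (rt i) (q i).
  move=> q qz qs.
  case: (boolP [exists i, v <= hA z (rt i) (q i)]) => [/existsP //|].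
  rewrite negb_exists => /forallP H; exfalso.
  suff : (\sum_(i < s) count (fun q => ~~ lexlt (hA z (rt i) q, (i : nat).+1) p0) (iota 0 z.+1) <= 2 * z)%N.
    lia.
  apply: leq_trans qs; apply: leq_sum => i _; apply: count_iota_le => q' nl.
  rewrite ltnNge; apply/negP => qq.
  have h1 := hmono i _ _ qq.
  have h2 : hA z (rt i) (q i) < v by rewrite ltNge H.
  move: nl; rewrite /lexlt /= -/v negb_or negb_and -leNgt.
  move=> /andP[hle _].
  have : hA z (rt i) q' < v by apply: le_lt_trans h1 h2.
  by rewrite ltNge hle.
split; first by move=> i; case: (site i).
split.
  apply: leq_trans cgt; apply: leq_sum => i _; by case: (site i).
move=> q qz qs j.
case: (site j) => _ _ [hv|ez].
- have [i hi] := X q qz qs; exists i; exact: le_trans hv hi.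
- exists j; rewrite ez; exact: hmono.
Qed.
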